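(* Let $K$ be a field and let $f\colon\mathbb Z^k\to K$ be a hypergeometric term on $\mathbb Z^k$ that is weakly factorial on a polyhedral region $\mathcal R$. Then there exist finitely many polyhedral regions $\mathcal R_1,\dots,\mathcal R_m$ such that $\mathcal R=\mathcal R_1\cup\cdots\cup\mathcal R_m$ and $f$ is factorial on each $\mathcal R_i$.
   Context: A hypergeometric term on $\mathbb Z^k$ over $K$ is a function $f\colon\mathbb Z^k\to K$ such that for each $i$ there are nonzero polynomials $A_i,B_i\in K[\vec z]$ with $A_i(\vec z)f(\vec z)=B_i(\vec z)f(\vec z+\vec e_i)$ for all $\vec z\in\mathbb Z^k$. A half-space is $\{\vec z:\vec v\cdot\vec z>n\}$ ($\vec v\in\mathbb Z^k$, $n\in\mathbb Z$); a polyhedral region is $\mathbb Z^k$ or a finite intersection of half-spaces. Notation: $\mathop{\mathrm{gp}}_{j=a}^{b}g(j)=\prod_{j=a}^{b-1}g(j)$ if $b\ge a$ and $=\prod_{j=b}^{a-1}g(j)^{-1}$ if $b<a$. $f$ is weakly factorial on $\mathcal R$ if there exist a finite $V\subset\mathbb Z^k$, univariate $a_{\vec v},b_{\vec v}\in K[z]$ ($\vec v\in V$) and $\vec z_0\in\mathcal R$ such that for all $\vec z\in\mathcal R$: $f(\vec z)=\prod_{\vec v\in V}\mathop{\mathrm{gp}}_{j=\vec z_0\cdot\vec v}^{\vec z\cdot\vec v}a_{\vec v}(j)/b_{\vec v}(j)$, and all $a_{\vec v}(j),b_{\vec v}(j)$ occurring in these products are nonzero. $f$ is factorial on $\mathcal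 R$ if there exist a finite $V\subset\mathbb Z^k$ and, for $\vec v\in V$, univariate $a_{\vec v},b_{\vec v}\in K[z]$ and integers $n_{\vec v}$ such that for all $\vec z\in\mathcal R$: $f(\vec z)=\prod_{\vec v\in V}\prod_{j=1}^{\vec v\cdot\vec z+n_{\vec v}}a_{\vec v}(j)/b_{\vec v}(j)$; each $\vec v\cdot\vec z+n_{\vec v}$ is a positive integer; and $a_{\vec v}(j),b_{\vec v}(j)\ne0$ for $1\le j\le\vec v\cdot\vec z+n_{\vec v}$. *)

(* Defs.v *)
From HB Require Import structures.
From mathcomp Require Import all_boot all_order all_algebra.
From mathcomp Require Import mpoly.
Set Implicit Arguments. Unset Strict Implicit. Unset Printing Implicit Defensive.
Import Order.TTheory GRing.Theory Num.Theory.
Local Open Scope ring_scope.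

Definition zvec (k : nat) := {ffun 'I_k -> int}.

Definition dotz k (v z : zvec k) : int := \sum_(i < k) v i * z i.

Definition shiftz k (z : zvec k) (i : 'I_k) : zvec k :=
  [ffun j => z j + (j == i)%:Z].

Definition zeval (K : fieldType) k (p : {mpoly K[k]}) (z : zvec k) : K :=
  p.@[fun j => (z j)%:~R].

Definition hypergeometric (K : fieldType) k (f : zvec k -> K) : Prop :=
  forall i : 'I_k, exists A B : {mpoly K[k]},
    A != 0 /\ B != 0 /\
    forall z : zvec k, zeval A z * f z = zeval B z * f (shiftz z i).

Definition halfspace k (h : zvec k * int) (z : zvec k) : Prop := h.2 < dotz h.1 z.
Definition region k (H : seq (zvec k * int)) (z : zvec k) : Prop :=
  forall h, h \in H -> halfspace h z.

Definition gp (K : fieldType) (a b : int) (g : int -> K) : K :=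
  if a <= b then \prod_(i < absz (b - a)) g (a + i%:Z)
  else (\prod_(i < absz (a - b)) g (b + i%:Z))^-1.

Definition weakly_factorial_on (K : fieldType) k (f : zvec k -> K)
    (R : zvec k -> Prop) : Prop :=
  exists (V : seq (zvec k)) (a b : zvec k -> {poly K}) (z0 : zvec k),
    uniq V /\ R z0 /\
    forall z, R z ->
      f z = \prod_(v <- V)
              gp (dotz z0 v) (dotz z v) (fun j => (a v).[j%:~R] / (b v).[j%:~R])
      /\ (forall v, v \in V -> forall j : int,
            Order.min (dotz z0 v) (dotz z v) <= j < Order.max (dotz z0 v) (dotz z v) ->
            (a v).[j%:~R] != 0 /\ (b v).[j%:~R] != 0).

Definition factorial_on (K : fieldType) k (f : zvec k -> K)
    (R : zvec k -> Prop) : Prop :=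
  exists (V : seq (zvec k)) (a b : zvec k -> {poly K}) (n : zvec k -> int),
    uniq V /\
    forall z, R z ->
      f z = \prod_(v <- V) \prod_(1 <= j < (absz (dotz v z + n v)).+1)
                              ((a v).[j%:R] / (b v).[j%:R])
      /\ (forall v, v \in V -> 0 < dotz v z + n v)
      /\ (forall v, v \in V -> forall j : nat, let N := absz (dotz v z + n v) in
            (0 < j)%N -> (j <= N)%N ->
            (a v).[j%:R] != 0 /\ (b v).[j%:R] != 0).

(* Main.v *)
Require Import Defs.
From HB Require Import structures.
From mathcomp Require Import all_boot all_order all_algebra.
From mathcomp Require Import mpoly.
From mathcomp Require Import zify ring.
Import Order.TTheory GRing.Theory Num.Theory.
Set Implicit Arguments. Unset Strict Implicit. Unset Printing Implicit Defensive.
Local Open Scope ring_scope.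

Lemma natzR (R : pzRingType) (n : nat) : ((n%:Z)%:~R : R) = n%:R.
Proof. by []. Qed.

Section Helpers.
Variable K : fieldType.
Variable k : nat.

Lemma dotzC (v z : zvec k) : dotz v z = dotz z v.
Proof. by rewrite /dotz; apply: eq_bigr => i _; rewrite mulrC. Qed.

Lemma dotz0 (z : zvec k) : dotz 0 z = 0.
Proof. by rewrite /dotz big1 // => i _; rewrite ffunE mul0r. Qed.

Definition negv (v : zvec k) : zvec k := [ffun i => - v i].

Lemma dotzN (v z : zvec k) : dotz (negv v) z = - dotz v z.
Proof. by rewrite /dotz -sumrN; apply: eq_bigr => i _; rewrite ffunE mulNr. Qed.

Lemma region_cat (A B : seq (zvec k * int)) z :
  region (A ++ B) z <-> region A z /\ region B z.
Proof.
split.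
  by move=> h; split=> x hx; apply: h; rewrite mem_cat hx ?orbT.
by case=> hA hB x; rewrite mem_cat => /orP[/hA|/hB].
Qed.

Definition tup := (zvec k * {poly K} * {poly K} * int)%type.

Definition Pf (x : tup) (z : zvec k) : K :=
  \prod_(1 <= j < (absz (dotz x.1.1.1 z + x.2)).+1)
     ((x.1.1.2).[j%:R] / (x.1.2).[j%:R]).

Definition good (x : tup) (z : zvec k) : Prop :=
  0 < dotz x.1.1.1 z + x.2 /\
  forall j : nat, (0 < j)%N -> (j <= absz (dotz x.1.1.1 z + x.2)%R)%N ->
    (x.1.1.2).[j%:R] != 0 /\ (x.1.2).[j%:R] != 0.

Lemma prodq_neq0 (a b : {poly K}) N :
  (forall j : nat, (0 < j)%N -> (j <= N)%N -> a.[j%:R] != 0 /\ b.[j%:R] != 0) ->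
  \prod_(1 <= j < N.+1) (a.[j%:R] / b.[j%:R]) != 0.
Proof.
move=> h; rewrite prodf_seq_neq0; apply/allP => j; rewrite mem_index_iota => /andP[j1 jN].
have [ha hb] := h j j1 jN.
by rewrite /= mulf_neq0 // invr_eq0.
Qed.

Lemma Pf_neq0 x z : good x z -> Pf x z != 0.
Proof. by case=> _ h; apply: prodq_neq0. Qed.

Lemma prod_split (F : nat -> K) N d :
  \prod_(1 <= j < (N + d).+1) F j =
  \prod_(1 <= j < d.+1) F j * \prod_(1 <= j < N.+1) F (j + d)%N.
Proof.
rewrite (@big_cat_nat _ _ _ d.+1) //=; last by rewrite ltnS leq_addl.
congr (_ * _).
have -> : d.+1 = (1 + d)%N by rewrite add1n.
by rewrite big_addn; congr (\big[_/_]_(_ <= _ < _) _); lia.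
Qed.


Definition shp (p : {poly K}) (d : nat) := p \Po ('X + (d%:R)%:P).

Lemma shpE p d (j : nat) : (shp p d).[j%:R] = p.[(j + d)%N%:R].
Proof. by rewrite /shp horner_comp !hornerE natrD. Qed.

Lemma merge2 (w : zvec k) (a1 b1 : {poly K}) (n1 : int) (a2 b2 : {poly K}) (n2 m : int) (d1 d2 : nat) z :
  n1 = m + d1%:Z -> n2 = m + d2%:Z -> 0 < dotz w z + m ->
  good (w,a1,b1,n1) z -> good (w,a2,b2,n2) z ->
  Pf (w,a1,b1,n1) z * Pf (w,a2,b2,n2) z =
    (\prod_(1<=j<d1.+1) (a1.[j%:R]/b1.[j%:R]) *
     \prod_(1<=j<d2.+1) (a2.[j%:R]/b2.[j%:R])) *
    Pf (w, shp a1 d1 * shp a2 d2, shp b1 d1 * shp b2 d2, m) z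
  /\ good (w, shp a1 d1 * shp a2 d2, shp b1 d1 * shp b2 d2, m) z.
Proof.
move=> e1 e2 hm [_ g1] [_ g2].
rewrite /= in g1 g2.
have E1 : absz (dotz w z + n1) = addn (absz (dotz w z + m)) d1 by rewrite e1; lia.
have E2 : absz (dotz w z + n2) = addn (absz (dotz w z + m)) d2 by rewrite e2; lia.
split.
  rewrite /Pf /= E1 E2 !prod_split.
  rewrite mulrACA -big_split /=; congr (_ * _); apply: eq_bigr => j _.
  by rewrite !hornerM !shpE mulf_div.
split => //= j j0 jN.
rewrite !hornerM !shpE.
have [h1 h1'] : a1.[(j + d1)%N%:R] != 0 /\ b1.[(j + d1)%N%:R] != 0.
  by apply: g1; [apply: leq_trans j0 (leq_addr _ _)| rewrite E1 leq_add2r].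
have [h2 h2'] : a2.[(j + d2)%N%:R] != 0 /\ b2.[(j + d2)%N%:R] != 0.
  by apply: g2; [apply: leq_trans j0 (leq_addr _ _)| rewrite E2 leq_add2r].
by rewrite !mulf_neq0.
Qed.


Lemma merge_list (R : zvec k -> Prop) z1 : R z1 -> forall L : seq tup,
  (forall x, x \in L -> forall z, R z -> good x z) ->
  exists (V : seq (zvec k)) (a b : zvec k -> {poly K}) (n : zvec k -> int) (c : K),
  [/\ uniq V, 0 \notin V, c != 0 &
   forall z, R z -> \prod_(x <- L) Pf x z = c * \prod_(v <- V) Pf (v, a v, b v, n v) z
     /\ (forall v, v \in V -> good (v, a v, b v, n v) z)].
Proof.
move=> Rz1; elim=> [|[[[w a1] b1] n1] L IH] hL.
  exists [::], (fun=> 0), (fun=> 0), (fun=> 0), 1; split; rewrite ?oner_neq0 //.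
  by move=> z _; rewrite !big_nil mulr1.
have [|V [a [b [n [c [uV V0 c0 HV]]]]]] := IH.
  by move=> x hx; apply: hL; rewrite inE hx orbT.
have gx : forall z, R z -> good (w,a1,b1,n1) z by apply: hL; rewrite inE eqxx.
have [ew|w0] := eqVneq w 0.
  subst w.
  exists V, a, b, n, (c * Pf (0,a1,b1,n1) z1); split => //.
    by rewrite mulf_neq0 // Pf_neq0 //; apply: gx.
  move=> z Rz; have [e g] := HV z Rz; split => //.
  rewrite big_cons e (_ : Pf _ z = Pf (0,a1,b1,n1) z1); last by rewrite /Pf /= !dotz0.
  by rewrite mulrCA mulrA.
case: (boolP (w \in V)) => wV.
  pose m := if n1 <= n w then n1 else n w.
  pose d1 := absz (n1 - m); pose d2 := absz (n w - m).
  have e1 : n1 = m + d1%:Z by rewrite /d1 /m; case: ifP => h; lia.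
  have e2 : n w = m + d2%:Z by rewrite /d2 /m; case: ifP => h; lia.
  have gw : forall z, R z -> good (w, a w, b w, n w) z.
    by move=> z Rz; apply: (HV z Rz).2.
  have hm : forall z, R z -> 0 < dotz w z + m.
    move=> z Rz; have [p1 _] := gx z Rz; have [p2 _] := gw z Rz.
    by move: p1 p2 => /= p1 p2; rewrite /m; case: ifP => h; lia.
  pose D := \prod_(1<=j<d1.+1) (a1.[j%:R]/b1.[j%:R]) *
     \prod_(1<=j<d2.+1) ((a w).[j%:R]/(b w).[j%:R]).
  pose a' := fun v => if v == w then shp a1 d1 * shp (a w) d2 else a v.
  pose b' := fun v => if v == w then shp b1 d1 * shp (b w) d2 else b v.
  pose n' := fun v => if v == w then m else n v.
  have MG := fun z Rz => merge2 e1 e2 (hm z Rz) (gx z Rz) (gw z Rz).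
  exists V, a', b', n', (c * D); split => //.
    rewrite mulf_neq0 //.
    have [eqm _] := MG z1 Rz1.
    have : Pf (w,a1,b1,n1) z1 * Pf (w, a w, b w, n w) z1 != 0.
      by rewrite mulf_neq0 // Pf_neq0 //; [apply: gx | apply: gw].
    by rewrite eqm mulf_eq0 negb_or => /andP[].
  move=> z Rz; have [e g] := HV z Rz; have [eqm gm] := MG z Rz.
  have rest : \prod_(v <- V | v != w) Pf (v, a' v, b' v, n' v) z =
              \prod_(v <- V | v != w) Pf (v, a v, b v, n v) z.
    by apply: eq_bigr => v /negbTE hv; rewrite /a' /b' /n' hv.
  split.
    rewrite big_cons e (bigD1_seq w) //= (bigD1_seq w) //= rest /a' /b' /n' eqxx.
    rewrite mulrCA [Pf _ z * (_ * _)]mulrA eqm.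
    by rewrite !mulrA.
  move=> v vV; rewrite /a' /b' /n'; case: eqP => [->|_] //.
  exact: g.
exists (w :: V), (fun v => if v == w then a1 else a v),
  (fun v => if v == w then b1 else b v), (fun v => if v == w then n1 else n v), c.
split => //.
- by rewrite cons_uniq wV uV.
- by rewrite inE negb_or eq_sym w0 V0.
move=> z Rz; have [e g] := HV z Rz; split.
  rewrite !big_cons e eqxx mulrCA; congr (_ * (_ * _)).
  apply: eq_big_seq => v vV; have -> : (v == w) = false.
    by apply/eqP => ew; move: wV; rewrite -ew vV.
  by [].
move=> v; rewrite inE; case: eqP => [->|_] /= vV; first exact: gx.
exact: g.
Qed.


Definition cons3 (v : zvec k) (c0 : int) : seq (seq (zvec k * int)) :=
  [:: [:: (v, c0)]; [:: (v, c0 - 1); (negv v, - c0 - 1)]; [:: (negv v, - c0)]].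

Lemma cover3 v c0 z : exists2 C, C \in cons3 v c0 & region C z.
Proof.
have [h|[h|h]] : c0 < dotz v z \/ dotz v z = c0 \/ dotz v z < c0 by lia.
- exists [:: (v, c0)]; first by rewrite !inE eqxx.
  by move=> x; rewrite inE => /eqP->.
- exists [:: (v, c0 - 1); (negv v, - c0 - 1)]; first by rewrite !inE eqxx ?orbT.
  move=> x; rewrite !inE => /orP[]/eqP->; rewrite /halfspace /= ?dotzN; lia.
- exists [:: (negv v, - c0)]; first by rewrite !inE eqxx ?orbT.
  by move=> x; rewrite inE => /eqP->; rewrite /halfspace /= dotzN; lia.
Qed.

Lemma castE (c : int) (i : nat) : ((c + i%:Z)%:~R : K) = (i.+1)%:R + (c - 1)%:~R.
Proof. rewrite !intrD natzR intrN mulrS; ring. Qed.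


Lemma factor3 (a b : {poly K}) v c0 C : C \in cons3 v c0 ->
  exists x : tup, forall z, region C z ->
   (forall j : int, Order.min c0 (dotz z v) <= j < Order.max c0 (dotz z v) ->
      a.[j%:~R] != 0 /\ b.[j%:~R] != 0) ->
   gp c0 (dotz z v) (fun j => a.[j%:~R] / b.[j%:~R]) = Pf x z /\ good x z.
Proof.
rewrite !inE => /or3P[]/eqP->.
- exists (v, a \Po ('X + ((c0 - 1)%:~R)%:P), b \Po ('X + ((c0 - 1)%:~R)%:P), - c0).
  move=> z hR; rewrite (dotzC z v) => hnv.
  have ht : c0 < dotz v z by apply: (hR (v, c0)); rewrite inE.
  rewrite min_l ?max_r ?ltW // in hnv.
  split.
    rewrite /gp /Pf /= (ltW ht) big_add1 /= big_mkord.
    apply: eq_bigr => i _; by rewrite !horner_comp !hornerE castE.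
  split=> /=; first lia.
  case=> // j _ jN; rewrite !horner_comp !hornerE -castE; apply: hnv; lia.
- exists (0, 1, 1, 1).
  move=> z hR; rewrite (dotzC z v) => hnv.
  have h1 : c0 - 1 < dotz v z by apply: (hR (v, c0 - 1)); rewrite inE eqxx.
  have h2 : - c0 - 1 < dotz (negv v) z by apply: (hR (negv v, - c0 - 1)); rewrite !inE eqxx orbT.
  rewrite dotzN in h2.
  have -> : dotz v z = c0 by lia.
  split.
    rewrite /gp /Pf /= lexx subrr /= big_ord0 dotz0 add0r /= big_nat1 hornerC.
    by rewrite divr1.
  split=> /=; rewrite dotz0 //.
  by move=> j _ _; rewrite hornerC oner_neq0.
- exists (negv v, b \Po ((c0%:~R)%:P - 'X), a \Po ((c0%:~R)%:P - 'X), c0).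
  move=> z hR; rewrite (dotzC z v) => hnv.
  have ht : - c0 < dotz (negv v) z by apply: (hR (negv v, - c0)); rewrite inE.
  rewrite dotzN in ht.
  have ht' : dotz v z < c0 by lia.
  rewrite min_r ?max_l ?ltW // in hnv.
  split.
    rewrite /gp /Pf /= dotzN ifF; last by apply/negbTE; rewrite -ltNge.
    rewrite -prodfV big_add1 /= big_nat_rev /= big_mkord.
    have -> : (- dotz v z + c0) = c0 - dotz v z by rewrite addrC.
    apply: eq_bigr => i _.
    rewrite invf_div !horner_comp !hornerE -natzR -intrB.
    have iN := ltn_ord i.
    have -> : c0 - (`|c0 - dotz v z| - i.+1).+1%:Z = dotz v z + i%:Z by lia.
    by [].
  split=> /=; rewrite dotzN; first lia.
  case=> // j _ jN; rewrite !horner_comp !hornerE -natzR -intrB.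
  have [hb ha] : b.[(c0 - j.+1%:Z)%:~R] != 0 /\ a.[(c0 - j.+1%:Z)%:~R] != 0.
    by apply/and_comm/hnv; lia.
  by [].
Qed.


Lemma pieces (a b : zvec k -> {poly K}) (z0 : zvec k) (W : seq (zvec k)) :
  exists Ps : seq (seq (zvec k * int)),
   (forall z, exists2 P, P \in Ps & region P z) /\
   (forall P, P \in Ps -> exists L : seq tup, forall z, region P z ->
     (forall v, v \in W -> forall j : int,
        Order.min (dotz z0 v) (dotz z v) <= j < Order.max (dotz z0 v) (dotz z v) ->
        (a v).[j%:~R] != 0 /\ (b v).[j%:~R] != 0) ->
     \prod_(v <- W) gp (dotz z0 v) (dotz z v) (fun j => (a v).[j%:~R] / (b v).[j%:~R])
       = \prod_(x <- L) Pf x z /\ (forall x, x \in L -> good x z)).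
Proof.
elim: W => [|v W [Ps [cov HP]]].
  exists [:: [::]]; split.
    by move=> z; exists [::]; rewrite ?inE // => x.
  move=> P; rewrite inE => /eqP-> {P}; exists [::] => z _ _.
  by rewrite !big_nil.
exists [seq C ++ P | C <- cons3 v (dotz z0 v), P <- Ps]; split.
  move=> z; have [C hC rC] := cover3 v (dotz z0 v) z.
  have [P hP rP] := cov z.
  exists (C ++ P); first exact: allpairs_f.
  by apply/region_cat.
move=> Q /allpairsP [[C P] [/= hC hP ->]].
have [x hx] := factor3 (a v) (b v) hC.
have [L hL] := HP P hP.
exists (x :: L) => z /region_cat [rC rP] hnv.
have [e1 g1] := hx z rC (hnv v (mem_head _ _)).
have [e2 g2] := hL z rP (fun w hw => hnv w (@mem_behead _ (v :: W) w hw)).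
split; first by rewrite !big_cons e1 e2.
by move=> y; rewrite inE => /orP[/eqP->|/g2].
Qed.

End Helpers.

From Stdlib Require Import Classical.
Unset Implicit Arguments.

Theorem lemmaB25 (K : fieldType) (k : nat) (f : zvec k -> K)
    (H : seq (zvec k * int)) :
  hypergeometric f ->
  weakly_factorial_on f (region H) ->
  exists Hs : seq (seq (zvec k * int)),
    (forall z, region H z <-> exists2 Hi, Hi \in Hs & region Hi z) /\
    (forall Hi, Hi \in Hs -> factorial_on f (region Hi)).
Proof.
move=> _ [Vw [a [b [z0 [uVw [Rz0 Hw]]]]]].
have [Ps [cov HP]] := pieces a b z0 Vw.
exists [seq H ++ P | P <- Ps]; split.
  move=> z; split.
    move=> rH; have [P hP rP] := cov z.
    by exists (H ++ P); [apply: map_f | apply/region_cat].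
  by case=> Hi /mapP [P _ ->] /region_cat [].
move=> Hi /mapP [P hP ->].
have [L hL] := HP P hP.
have goodL : forall x, x \in L -> forall z, region (H ++ P) z -> good x z.
  move=> x hx z /region_cat [rH rP].
  exact: ((hL z rP (Hw z rH).2).2 x hx).
case: (classic (exists z1, region (H ++ P) z1)) => [[z1 Rz1]|nE]; last first.
  exists [::], (fun=> 0), (fun=> 0), (fun=> 0); split => // z Rz.
  by case: nE; exists z.
have [V [a' [b' [n' [c [uV V0 c0 HV]]]]]] := merge_list Rz1 goodL.
exists (0 :: V), (fun v => if v == 0 then c%:P else a' v),
  (fun v => if v == 0 then 1 else b' v), (fun v => if v == 0 then 1 else n' v).
split; first by rewrite cons_uniq V0.
move=> z Rz; have [e g] := HV z Rz.
have /region_cat [rH rP] := Rz.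
have [ef _] := Hw z rH.
have [eL _] := hL z rP (Hw z rH).2.
split.
  rewrite ef eL e big_cons eqxx dotz0 add0r /= big_nat1 !hornerC divr1.
  congr (_ * _); apply: eq_big_seq => v vV.
  have -> : (v == 0) = false by apply/eqP => ev; move: V0; rewrite -ev vV.
  by [].
split.
  move=> v; rewrite inE; case: eqP => [->|nv] /= vV; first by rewrite dotz0.
  by have [] := g v vV.
move=> v; rewrite inE; case: eqP => [->|nv] /= vV j.
  by move=> _ _; rewrite !hornerC; split; [exact: c0 | exact: oner_neq0].
have [_ gv] := g v vV; exact: gv.
Qed.
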